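(* Let $n\geq 1$, $B^n:=\{(x_1,\dots,x_n)\in\mathbb{R}^n: 1\geq x_1\geq\dots\geq x_n\geq 0\}$ and let $T\colon B^n\to B^n$ be the subtractive Selmer map defined below. For $j\in\{0,\dots,n\}$ put $B(j):=\{x\in B^n: i(1,x_1,\dots,x_n)=j\}$. Then the sets $B(0),\dots,B(n)$ form a partition of $B^n$ and the restriction of $T$ to each $B(j)$ is injective; hence $(B^n,T)$ is a fibred system with digit set $\{0,\dots,n\}$.
   Context: Let $\Delta^{n+1}:=\{b=(b_0,\dots,b_n): b_0\geq b_1\geq\dots\geq b_n\geq 0\}$. For $b\in\Delta^{n+1}$ let $i(b)$ be the smallest index $j\in\{0,\dots,n\}$ with $b_0-b_n\geq b_{j+1}$ (convention $b_{n+1}:=0$), and define $\pi\sigma b:=(b_1,\dots,b_{i},\,b_0-b_n,\,b_{i+1},\dots,b_n)$ with $i=i(b)$ (for $i=0$ this is $(b_0-b_n,b_1,\dots,b_n)$, for $i=n$ it is $(b_1,\dots,b_n,b_0-b_n)$); then $\pi\sigma b\in\Delta^{n+1}$. Let $p(b_0,\dots,b_n)=(b_1/b_0,\dots,b_n/b_0)$. The map $T$ is $T(x):=p(\pi\sigma(1,x_1,\dots,x_n))$. A fibred system is a pair $(B,T)$, $T\colon B\to B$, with a finite or countable digit set $I$ and a map $k\colon B\to I$ such that the sets $k^{-1}\{i\}$ partition $B$ and $T$ is injective on each of them. *)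

(* Defs.v *)
From HB Require Import structures.
From mathcomp Require Import all_boot all_order all_algebra.
From mathcomp Require Import reals.
Set Implicit Arguments. Unset Strict Implicit. Unset Printing Implicit Defensive.
Import Order.TTheory GRing.Theory Num.Theory.
Local Open Scope ring_scope.

(* Points of Delta^{n+1} are encoded as nat-indexed sequences b : nat -> R,
   of which only the entries b 0, ..., b n are relevant. *)

Definition inDelta (R : realType) (n : nat) (b : nat -> R) : Prop :=
  (forall k : nat, (k < n)%N -> b k.+1 <= b k) /\ 0 <= b n.

Definition bext (R : realType) (n : nat) (b : nat -> R) (k : nat) : R :=
  if (k <= n)%N then b k else 0.

(* i(b) : smallest j in {0,...,n} with b_0 - b_n >= b_{j+1}
   (returns n+1 if there is none, which never happens on Delta^{n+1}) *)
Definition idx (R : realType) (n : nat) (b : nat -> R) : nat :=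
  find (fun j => bext n b j.+1 <= b 0%N - b n) (iota 0 n.+1).

(* pi sigma b = (b_1,...,b_i, b_0 - b_n, b_{i+1},...,b_n) with i = i(b) *)
Definition pisigma (R : realType) (n : nat) (b : nat -> R) : nat -> R :=
  fun k => let i := idx n b in
    if (k < i)%N then b k.+1 else if k == i then b 0%N - b n else b k.

(* (1, x_1, ..., x_n) for x in R^n (x_{k+1} is x ord0 k) *)
Definition ext (R : realType) (n : nat) (x : 'rV[R]_n) : nat -> R :=
  fun k => if k == 0%N then 1 else
    match (insub k.-1 : option 'I_n) with Some i => x ord0 i | None => 0 end.

Definition inB (R : realType) (n : nat) (x : 'rV[R]_n) : Prop :=
  inDelta n (ext x).

(* p(b_0,...,b_n) = (b_1/b_0, ..., b_n/b_0); T(x) = p(pi sigma (1,x)) *)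
Definition Tsel (R : realType) (n : nat) (x : 'rV[R]_n) : 'rV[R]_n :=
  \row_(k < n) (pisigma n (ext x) k.+1 / pisigma n (ext x) 0%N).

Definition digit (R : realType) (n : nat) (x : 'rV[R]_n) : nat := idx n (ext x).

Definition Bj (R : realType) (n : nat) (j : nat) : 'rV[R]_n -> Prop :=
  fun x => inB x /\ digit x = j.

Definition fibred_system (X I : Type) (B : X -> Prop) (T : X -> X)
  (D : I -> Prop) (k : X -> I) : Prop :=
  (forall x, B x -> B (T x)) /\
  (forall x, B x -> D (k x)) /\
  (forall i, D i -> forall x y, B x -> B y -> k x = i -> k y = i ->
     T x = T y -> x = y).

(* Main.v *)
Require Import Defs.
From HB Require Import structures.
From mathcomp Require Import all_boot all_order all_algebra.
From mathcomp Require Import reals ring lra zify.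
Set Implicit Arguments. Unset Strict Implicit. Unset Printing Implicit Defensive.
Import Order.TTheory GRing.Theory Num.Theory.
Local Open Scope ring_scope.

Section S.
Variable R : realType.
Variable n : nat.
Implicit Types b : nat -> R.

Lemma ext0 (x : 'rV[R]_n) : ext x 0 = 1.
Proof. by []. Qed.

Lemma extS (x : 'rV[R]_n) k (hk : (k < n)%N) : ext x k.+1 = x ord0 (Ordinal hk).
Proof. by rewrite /ext /= insubT. Qed.

Definition P b : pred nat := fun j => bext n b j.+1 <= b 0%N - b n.

Lemma mono b : inDelta n b -> forall k m, (k <= m)%N -> (m <= n)%N -> b m <= b k.
Proof.
move=> [hd _] k m km mn; elim: m km mn => [|m IH] km mn.
  by move: km; rewrite leqn0 => /eqP ->.
case: (ltngtP k m.+1) km => // [lt _|-> _]; last by [].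
apply: le_trans (hd m mn) (IH _ (ltnW mn)); by [].
Qed.

Lemma idx_le b : inDelta n b -> (idx n b <= n)%N.
Proof.
move=> hb; rewrite /idx.
have : (find (P b) (iota 0 n.+1) < size (iota 0 n.+1))%N.
  rewrite -has_find; apply/hasP; exists n; first by rewrite mem_iota add0n leq0n ltnSn.
  rewrite /P /bext ltnn subr_ge0; exact: (mono hb (leq0n n) (leqnn n)).
by rewrite size_iota.
Qed.

Lemma idx_spec b : inDelta n b ->
  bext n b (idx n b).+1 <= b 0%N - b n /\
  forall j, (j < idx n b)%N -> b 0%N - b n < b j.+1.
Proof.
move=> hb; have hi := idx_le hb; split.
  have := @nth_find _ 0%N (P b) (iota 0 n.+1).
  rewrite nth_iota ?add0n; last by [].
  apply; rewrite has_find size_iota; by [].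
move=> j hj; have := @before_find _ 0%N (P b) (iota 0 n.+1) j hj.
rewrite nth_iota; last by lia.
rewrite add0n /P /bext.
have -> : (j.+1 <= n)%N by lia.
by rewrite leNgt => /negbFE.
Qed.


Lemma ps_lt b k : (k < idx n b)%N -> pisigma n b k = b k.+1.
Proof. by rewrite /pisigma => ->. Qed.
Lemma ps_eq b : pisigma n b (idx n b) = b 0%N - b n.
Proof. by rewrite /pisigma ltnn eqxx. Qed.
Lemma ps_gt b k : (idx n b < k)%N -> pisigma n b k = b k.
Proof. by rewrite /pisigma => h; rewrite ltnNge (ltnW h) /= gtn_eqF. Qed.

Lemma ps_delta b : inDelta n b -> inDelta n (pisigma n b).
Proof.
move=> hb; have hi := idx_le hb; have [h1 h2] := idx_spec hb.
have hm := mono hb; have [hd hn0] := hb.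
split.
  move=> k kn.
  case: (ltngtP k.+1 (idx n b)) => h.
  - rewrite ps_lt; last lia. rewrite ps_lt; last lia. apply: hd; lia.
  - case: (ltngtP k (idx n b)) => h'; first lia.
    + rewrite ps_gt; last lia. rewrite ps_gt; last lia. apply: hd; lia.
    + rewrite h' ps_eq ps_gt; last lia.
      move: h1; rewrite /bext; have -> : ((idx n b).+1 <= n)%N by lia. by [].
  - rewrite h ps_eq ps_lt; last lia.
    by apply: ltW; apply: h2; lia.
case: (ltngtP n (idx n b)) => h; first lia.
  rewrite ps_gt //.
have -> : pisigma n b n = pisigma n b (idx n b) by rewrite -h.
rewrite ps_eq subr_ge0; exact: hm.
Qed.

Lemma ps_pos b : (1 <= n)%N -> inDelta n b -> b 0%N = 1 -> 0 < pisigma n b 0.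
Proof.
move=> n1 hb b01; have hi := idx_le hb; have [h1 h2] := idx_spec hb.
have hm := mono hb; have [hd hn0] := hb.
have hb1 : b n <= b 1%N by apply: hm.
have hb0 : b n <= b 0%N by apply: hm.
case: (posnP (idx n b)) => h.
  move: h1; rewrite -h ps_eq /bext h n1 => h1; lra.
rewrite ps_lt //; have := h2 0%N h; lra.
Qed.


Lemma extT (x : 'rV[R]_n) k : pisigma n (ext x) 0 != 0 -> (k <= n)%N ->
  ext (Tsel x) k = pisigma n (ext x) k / pisigma n (ext x) 0.
Proof.
move=> h0; case: k => [|k] hk; first by rewrite ext0 divff.
by rewrite (extS _ hk) /Tsel mxE.
Qed.

Lemma Tsel_in (x : 'rV[R]_n) : (1 <= n)%N -> inB x -> inB (Tsel x).
Proof.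
move=> n1 hx; have p0 := ps_pos n1 hx (ext0 x).
have p0' : pisigma n (ext x) 0 != 0 by rewrite gt_eqF.
have [hd hn] := ps_delta hx.
split.
  move=> k kn; rewrite !extT //; last by lia.
  by rewrite ler_pM2r ?invr_gt0 //; apply: hd.
by rewrite extT // divr_ge0 // ltW.
Qed.

Lemma Tsel_inj (x y : 'rV[R]_n) : (1 <= n)%N -> inB x -> inB y ->
  digit x = digit y -> Tsel x = Tsel y -> x = y.
Proof.
move=> n1 hx hy hd hT.
have px := ps_pos n1 hx (ext0 x); have py := ps_pos n1 hy (ext0 y).
have px' : pisigma n (ext x) 0 != 0 by rewrite gt_eqF.
have py' : pisigma n (ext y) 0 != 0 by rewrite gt_eqF.
set mu := pisigma n (ext y) 0 / pisigma n (ext x) 0.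
have hp : forall k, (k <= n)%N -> pisigma n (ext y) k = mu * pisigma n (ext x) k.
  move=> k kn; have := extT px' kn; rewrite hT (extT py' kn) => e.
  rewrite -[LHS](mulfVK py') e /mu; field; exact: px'.
have hi : idx n (ext y) = idx n (ext x) by [].
have hb : forall k, (1 <= k <= n)%N -> ext y k = mu * ext x k.
  move=> k /andP [k1 kn].
  case: (leqP k (idx n (ext x))) => h.
    have := hp k.-1 ltac:(lia); rewrite (ps_lt (b:=ext x)); last lia.
    rewrite (ps_lt (b:=ext y)); last lia.
    by rewrite prednK //.
  have := hp k kn; rewrite (ps_gt (b:=ext x)) // (ps_gt (b:=ext y)) //.
  by rewrite hi.
have he : ext y 0%N - ext y n = mu * (ext x 0%N - ext x n).
  have := hp _ (idx_le hx); rewrite (ps_eq (ext x)) -{1}hi (ps_eq (ext y)) //.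
have hn := hb n ltac:(lia).
have mu1 : mu = 1 by move: he; rewrite hn !ext0 => he; lra.
apply/matrixP => i j; rewrite (ord1 i).
case: j => j jn.
have := hb j.+1 ltac:(lia); rewrite mu1 mul1r !(extS _ jn).
by move=> ->.
Qed.

End S.

Theorem mainTheorem2 (R : realType) (n : nat) (hn : (1 <= n)%N) :
  (* B(0), ..., B(n) cover B^n *)
  (forall x : 'rV[R]_n, inB x -> exists j, (j <= n)%N /\ Bj j x) /\
  (* and are pairwise disjoint *)
  (forall (j1 j2 : nat) (x : 'rV[R]_n), Bj j1 x -> Bj j2 x -> j1 = j2) /\
  (* T is injective on each B(j) *)
  (forall j : nat, (j <= n)%N -> forall x y : 'rV[R]_n,
     Bj j x -> Bj j y -> Tsel x = Tsel y -> x = y) /\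
  (* hence (B^n, T) is a fibred system with digit set {0,...,n} *)
  fibred_system (@inB R n) (@Tsel R n) (fun j : nat => (j <= n)%N) (@digit R n).
Proof.
split.
  move=> x hx; exists (digit x); split; last by [].
  exact: idx_le hx.
split.
  by move=> j1 j2 x [_ <-] [_ <-].
split.
  move=> j _ x y [hx dx] [hy dy]; apply: Tsel_inj => //; by rewrite dx dy.
split; first by move=> x; exact: Tsel_in.
split; first by move=> x hx; exact: idx_le hx.
move=> j _ x y hx hy dx dy; apply: Tsel_inj => //; by rewrite dx dy.
Qed.
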